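(* Let $K\in\mathcal{K}$, let $K'=R^{-1}B^\top P_K$, and let $\Psi_K=(K-K')^\top R(K-K')$. If $\Psi_K=0$, then $K=K^\star$.
   Context: Let $A\in\mathbb{R}^{n\times n}$, $B\in\mathbb{R}^{n\times m}$, $C\in\mathbb{R}^{p\times n}$, $D\in\mathbb{R}^{n\times q}$, $E\in\mathbb{R}^{p\times m}$, $\gamma>0$, with $Q:=C^\top C\succ 0$, $E^\top C=0$, $R:=E^\top E\succ 0$. For $K\in\mathbb{R}^{m\times n}$ set $A_K=A-BK$, $Q_K=Q+K^\top RK$, $T_{zw}(K)(s)=(C-EK)(sI-A+BK)^{-1}D$, and $\mathcal{K}=\{K:\ A_K\text{ Hurwitz},\ \|T_{zw}(K)\|_{\mathcal{H}_\infty}<\gamma\}$, where $\|G\|_{\mathcal{H}_\infty}=\sup_{\omega\in\mathbb{R}}\bar\sigma(G(j\omega))$. For $K\in\mathcal{K}$, $P_K$ denotes the unique symmetric positive definite solution of $A_K^\top P+PA_K+Q_K+\gamma^{-2}PDD^\top P=0$ for which $A_K+\gamma^{-2}DD^\top P_K$ is Hurwitz. $P^\star$ denotes the unique symmetric positive definite (stabilizing) solution of $A^\top P+PA-P(BR^{-1}B^\top-\gamma^{-2}DD^\top)P+Q=0$, and $K^\star=R^{-1}B^\top P^\star$. *)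

(* Defs.v *)
From HB Require Import structures.
From mathcomp Require Import all_boot all_order all_algebra.
From mathcomp Require Import all_classical all_reals.
From mathcomp Require Import ereal complex.
Set Implicit Arguments. Unset Strict Implicit. Unset Printing Implicit Defensive.
Import Order.TTheory GRing.Theory Num.Theory.
Local Open Scope ring_scope.
Local Open Scope classical_set_scope.

Section Defs.
Variable R : realType.

Definition cmx (m n : nat) (M : 'M[R]_(m, n)) : 'M[R[i]]_(m, n) :=
  map_mx (fun x => (x%:C)%C) M.

Definition hurwitz (n : nat) (A : 'M[R]_n) : Prop :=
  forall (lam : R[i]) (v : 'cV[R[i]]_n),
    v != 0 -> cmx A *m v = lam *: v -> complex.Re lam < 0.

Definition sym_mx (n : nat) (P : 'M[R]_n) : Prop := P^T = P.
Definition posdef (n : nat) (P : 'M[R]_n) : Prop :=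
  sym_mx P /\ forall x : 'cV[R]_n, x != 0 -> 0 < (x^T *m P *m x) 0 0.

Definition cvnorm (n : nat) (v : 'cV[R[i]]_n) : R :=
  Num.sqrt (\sum_i ((complex.Re (v i 0)) ^+ 2 + (complex.Im (v i 0)) ^+ 2)).

Definition sigma_max (p q : nat) (M : 'M[R[i]]_(p, q)) : R :=
  sup [set cvnorm (M *m x) | x in [set x : 'cV[R[i]]_q | cvnorm x = 1]].

(* H-infinity norm (extended-real valued, +oo if unbounded) of a transfer
   function given by its values on the imaginary axis *)
Definition hinf_norm (p q : nat) (G : R -> 'M[R[i]]_(p, q)) : \bar R :=
  ereal_sup [set (sigma_max (G w))%:E | w in [set: R]].

Definition Tzw (n m p q : nat) (A : 'M[R]_n) (B : 'M[R]_(n, m))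
  (C : 'M[R]_(p, n)) (D : 'M[R]_(n, q)) (E : 'M[R]_(p, m))
  (K : 'M[R]_(m, n)) (w : R) : 'M[R[i]]_(p, q) :=
  cmx (C - E *m K) *m invmx ((('i%C * (w%:C)%C) %:M) - cmx (A - B *m K)) *m cmx D.

Definition admissible (n m p q : nat) (A : 'M[R]_n) (B : 'M[R]_(n, m))
  (C : 'M[R]_(p, n)) (D : 'M[R]_(n, q)) (E : 'M[R]_(p, m)) (gamma : R)
  (K : 'M[R]_(m, n)) : Prop :=
  hurwitz (A - B *m K) /\ (hinf_norm (Tzw A B C D E K) < gamma%:E)%E.

Definition is_PK (n m p q : nat) (A : 'M[R]_n) (B : 'M[R]_(n, m))
  (C : 'M[R]_(p, n)) (D : 'M[R]_(n, q)) (E : 'M[R]_(p, m)) (gamma : R)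
  (K : 'M[R]_(m, n)) (P : 'M[R]_n) : Prop :=
  let AK := A - B *m K in
  let QK := C^T *m C + K^T *m (E^T *m E) *m K in
  posdef P /\
  AK^T *m P + P *m AK + QK + gamma ^-2 *: (P *m D *m D^T *m P) = 0 /\
  hurwitz (AK + gamma ^-2 *: (D *m D^T *m P)).

Definition is_Pstar (n m p q : nat) (A : 'M[R]_n) (B : 'M[R]_(n, m))
  (C : 'M[R]_(p, n)) (D : 'M[R]_(n, q)) (E : 'M[R]_(p, m)) (gamma : R)
  (P : 'M[R]_n) : Prop :=
  let S := B *m invmx (E^T *m E) *m B^T - gamma ^-2 *: (D *m D^T) in
  posdef P /\
  A^T *m P + P *m A - P *m S *m P + C^T *m C = 0 /\
  hurwitz (A - S *m P).

End Defs.

(* Main.v *)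
Require Import Defs.
From HB Require Import structures.
From mathcomp Require Import all_boot all_order all_algebra.
From mathcomp Require Import all_classical all_reals.
From mathcomp Require Import ereal complex.
Import Order.TTheory GRing.Theory Num.Theory.
Local Open Scope ring_scope.
Section Syl.
Variable R : realType.
Local Notation C := R[i].

Lemma cmxM (a b c : nat) (X : 'M[R]_(a,b)) (Y : 'M[R]_(b,c)) : cmx (X *m Y) = cmx X *m cmx Y.
Proof. by rewrite /cmx map_mxM. Qed.
Lemma cmxT (a b : nat) (X : 'M[R]_(a,b)) : cmx X^T = (cmx X)^T.
Proof. by rewrite /cmx map_trmx. Qed.
Lemma cmxD (a b : nat) (X Y : 'M[R]_(a,b)) : cmx (X + Y) = cmx X + cmx Y.
Proof. by rewrite /cmx map_mxD. Qed.
Lemma cmx0 (a b : nat) : cmx (0 : 'M[R]_(a,b)) = 0.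
Proof. by rewrite /cmx map_mx0. Qed.
Lemma cmx_inj (a b : nat) (X Y : 'M[R]_(a,b)) : cmx X = cmx Y -> X = Y.
Proof.
move=> h; apply/matrixP=> i j; have := congr1 (fun M : 'M[C]_(a,b) => M i j) h.
by rewrite !mxE => -[].
Qed.

Lemma hurwitz_col (k : nat) (M : 'M[R]_k) (z : C) (v : 'rV[C]_k) :
  hurwitz M -> v != 0 -> v *m (cmx M)^T = z *: v -> complex.Re z < 0.
Proof.
move=> hM v0 e; apply: (hM z v^T); first by rewrite trmx_eq0.
by rewrite -[cmx M]trmxK -trmx_mul e linearZ.
Qed.

Lemma sylv0 (k : nat) (M1 M2 X : 'M[R]_k.+1) :
  hurwitz M1 -> hurwitz M2 -> M1^T *m X + X *m M2 = 0 -> X = 0.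
Proof.
move=> h1 h2 e.
set a := cmx M1; set b := cmx M2; set Y := cmx X.
have eY : a^T *m Y = Y *m (- b).
  have := congr1 (@cmx R k.+1 k.+1) e; rewrite cmxD !cmxM cmxT cmx0 -/a -/b -/Y => /eqP.
  by rewrite addr_eq0 => /eqP ->; rewrite mulmxN.
have [s es] := closed_field_poly_normal (char_poly a^T).
rewrite (monicP (char_poly_monic _)) scale1r in es.
have key : forall s' : seq C,
  (\prod_(z <- s') (a^T - z%:M)) *m Y = Y *m \prod_(z <- s') (- b - z%:M).
  elim=> [|z s' IH]; first by rewrite !big_nil mul1mx mulmx1.
  rewrite !big_cons -!mulmxE -mulmxA IH !mulmxA; congr (_ *m _).
  rewrite mulmxBl eY mulmxBr; congr (_ - _); by rewrite mul_scalar_mx mul_mx_scalar.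
have H0 : (\prod_(z <- s) (a^T - z%:M)) = 0.
  rewrite -(Cayley_Hamilton a^T) es rmorph_prod; apply: eq_bigr => z _.
  by rewrite rmorphB /= horner_mx_X horner_mx_C.
have Hu : forall s' : seq C, {subset s' <= s} -> (\prod_(z <- s') (- b - z%:M)) \in unitmx.
  elim=> [|z s' IH] sub; first by rewrite big_nil unitmx1.
  rewrite big_cons -mulmxE unitmx_mul IH ?andbT; last by move=> x xs; apply: sub; rewrite inE xs orbT.
  have zs : z \in s by apply: sub; rewrite inE eqxx.
  have : root (char_poly a^T) z by rewrite es root_prod_XsubC.
  rewrite -eigenvalue_root_char => /eigenvalueP [v ev v0].
  have rz := @hurwitz_col _ M1 z v h1 v0 ev.
  rewrite -unitmx_tr unitmxE unitfE; apply/negP => /det0P [w w0 ew].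
  have : w *m (cmx M2)^T = (- z) *: w.
    move/eqP: ew; rewrite linearB /= linearN /= tr_scalar_mx mulmxBr mulmxN -opprD oppr_eq0 addr_eq0 => /eqP ->.
    by rewrite mul_mx_scalar scaleNr.
  move/(@hurwitz_col _ M2 _ w h2 w0); rewrite (_ : complex.Re (- z) = - complex.Re z); last by case: (z).
  rewrite oppr_lt0 => /lt_trans /(_ rz).
  by rewrite ltxx.
have : Y *m \prod_(z <- s) (- b - z%:M) = 0 by rewrite -key H0 mul0mx.
move/(congr1 (mulmx^~ (invmx (\prod_(z <- s) (- b - z%:M))))).
rewrite -mulmxA mulmxV ?Hu // mulmx1 mul0mx => Y0.
by apply: cmx_inj; rewrite cmx0 -Y0.
Qed.
End Syl.
Lemma zm1 (V : zmodType) (a b c d e : V) :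
  a - c + (b - c) + d + c + e = a + b - (c - e) + d.
Proof.
rewrite opprB !addrA [LHS](ACl (1*3*7*2*5*4*6)) /= subrK //.
Qed.

Lemma zm2 (V : zmodType) (a1 a2 c1 x b1 b2 c2 d : V) :
  a1 - a2 - c1 + x + (b1 - x - b2 + c2) = (a1 + b1 - c1 + d) - (a2 + b2 - c2 + d).
Proof.
rewrite !opprD !opprK !addrA [LHS](ACl (1*5*3*2*7*8*4*6)) [RHS](ACl (1*2*3*5*6*7*4*8)) /= !addrK //.
Qed.

Lemma zm3 (V : zmodType) (a1 a2 c1 x b1 b2 c2 d : V) :
  a1 - a2 - (c1 - x) + (b1 - b2 - (x - c2)) = (a1 + b1 - c1 + d) - (a2 + b2 - c2 + d).
Proof.
rewrite !opprD !opprK !addrA [LHS](ACl (1*5*3*2*6*8*4*7)) [RHS](ACl (1*2*3*5*6*7*4*8)) /= !addrK //.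
Qed.
Lemma sylv (R : realType) (k : nat) (M1 M2 X : 'M[R]_k) :
  hurwitz M1 -> hurwitz M2 -> M1^T *m X + X *m M2 = 0 -> X = 0.
Proof.
case: k M1 M2 X => [|k] M1 M2 X; last exact: sylv0.
by move=> *; apply/matrixP => [[]].
Qed.

Lemma posdef_unit (R : realType) (k : nat) (M : 'M[R]_k) : posdef M -> M \in unitmx.
Proof.
move=> [sM pM]; rewrite -unitmx_tr unitmxE unitfE; apply/negP => /det0P [v v0 ev].
have := pM v^T; rewrite trmx_eq0 v0 trmxK => /(_ isT).
by rewrite -sM ev mul0mx mxE ltxx.
Qed.

Lemma posdef_zero (R : realType) (k l : nat) (M : 'M[R]_k) (Dd : 'M[R]_(k, l)) :
  posdef M -> Dd^T *m M *m Dd = 0 -> Dd = 0.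
Proof.
move=> [sM pM] e; apply/matrixP => i j; rewrite mxE.
have : Dd *m (delta_mx j 0 : 'cV[R]_l) = 0.
  apply/eqP; apply/negP => /negP /pM.
  by rewrite trmx_mul !mulmxA -(mulmxA _ Dd^T) -(mulmxA _ (Dd^T *m M)) e mulmx0 mul0mx mxE ltxx.
by rewrite -colE => /matrixP /(_ i 0); rewrite !mxE.
Qed.

Theorem lemma4 (R : realType) (n m p q : nat)
  (A : 'M[R]_n) (B : 'M[R]_(n, m)) (C : 'M[R]_(p, n)) (D : 'M[R]_(n, q))
  (E : 'M[R]_(p, m)) (gamma : R)
  (K : 'M[R]_(m, n)) (PK Pstar : 'M[R]_n) :
  0 < gamma ->
  posdef (C^T *m C) ->
  E^T *m C = 0 ->
  posdef (E^T *m E) ->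
  admissible A B C D E gamma K ->
  is_PK A B C D E gamma K PK ->
  is_Pstar A B C D E gamma Pstar ->
  let Kp := invmx (E^T *m E) *m B^T *m PK in
  (K - Kp)^T *m (E^T *m E) *m (K - Kp) = 0 ->
  K = invmx (E^T *m E) *m B^T *m Pstar.
Proof.
move=> _ _ _ Rpd _ [PKpd [PKare PKhur]] [Pspd [Psare Pshur]] Kp HPsi.
rewrite {}/Kp in HPsi.
have HK : K = invmx (E^T *m E) *m B^T *m PK by apply/eqP; rewrite -subr_eq0; apply/eqP; exact: posdef_zero Rpd HPsi.
rewrite HK; congr (_ *m _).
set Rm := E^T *m E in Rpd PKare PKhur Psare Pshur HPsi HK *.
set Ri := invmx Rm.
have Ru : Rm \in unitmx by exact: posdef_unit.
have RiT : Ri^T = Ri by rewrite /Ri trmx_inv Rpd.1.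
set G := B *m Ri *m B^T.
have GT : G^T = G by rewrite /G !trmx_mul trmxK RiT mulmxA.
set DD := D *m D^T.
have DDT : DD^T = DD by rewrite /DD trmx_mul trmxK.
set S := G - gamma ^-2 *: DD.
have ST : S^T = S by rewrite /S linearB /= linearZ /= GT DDT.
have PKT : PK^T = PK := PKpd.1.
have PsT : Pstar^T = Pstar := Pspd.1.
have BK : B *m K = G *m PK by rewrite HK /G !mulmxA.
have KT : K^T = PK *m B *m Ri by rewrite HK !trmx_mul trmxK PKT RiT !mulmxA.
have KRK : K^T *m Rm *m K = PK *m G *m PK.
  by rewrite KT HK /G -/Ri !mulmxA -(mulmxA _ E^T E) -/Rm -(mulmxA _ Ri Rm) mulVmx // mulmx1.
have SP : forall P : 'M[R]_n, S *m P = G *m P - gamma ^-2 *: (DD *m P).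
  by move=> P; rewrite /S mulmxBl -scalemxAl.
have are1 : A^T *m PK + PK *m A - PK *m S *m PK + C^T *m C = 0.
  rewrite -PKare BK KRK -(mulmxA PK S PK) SP mulmxBr -scalemxAr -zm1.
  by rewrite [(A - _)^T]linearB /= trmx_mul PKT GT mulmxBl mulmxBr /DD !mulmxA !addrA.
have hur1 : hurwitz (A - S *m PK).
  by rewrite SP opprB addrA addrAC -BK /DD.
apply/eqP; rewrite -subr_eq0; apply/eqP.
have hur2 : hurwitz (A - S *m Pstar) by [].
have are2 : A^T *m Pstar + Pstar *m A - Pstar *m S *m Pstar + C^T *m C = 0 by [].
clearbody S.
apply: (@sylv _ _ _ _ _ hur1 hur2).
rewrite [(A - _)^T]linearB /= trmx_mul PKT ST mulmxBl !mulmxBr !mulmxBl !mulmxA.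
rewrite -[0](subrr (0 : 'M[R]_n)) -{1}are1 -are2 ?mulmxA.
exact: zm3.
Qed.
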